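(* Let $\mathbf u:[0,\infty)\to(0,\infty)^N$ be a differentiable solution of the flux-differencing scheme $$\frac{du_i}{dt}=-2\sum_{j=1}^N D_{ij}\,F^\star(u_i,u_j),\qquad i=1,\dots,N.$$ (i) If $F^\star=F^\star_{\mathrm{geom}}$, then $\mathcal S(\mathbf u)=-2\sum_i H_{ii}\sqrt{u_i/a_i}$ is constant in time. (ii) If $F^\star=F^\star_{\log}$, then $\mathcal S(\mathbf u)=\sum_i H_{ii}\big(u_i\log(a_iu_i)-u_i\big)$ is constant in time.
   Context: $N\ge2$; $H=\operatorname{diag}(H_{ii})$ with $H_{ii}>0$; $Q\in\mathbb R^{N\times N}$ with $Q+Q^T=0$ and $Q\mathbf 1=\mathbf 0$ ($\mathbf 1$ the vector of ones); $D=H^{-1}Q$. Coefficients $a_i>0$ are fixed (time independent). Two-point fluxes: geometric $F^\star_{\mathrm{geom}}(u_i,u_j)=\sqrt{a_iu_i\,a_ju_j}$; logarithmic $F^\star_{\log}(u_i,u_j)=\dfrac{a_ju_j-a_iu_i}{\log(a_ju_j)-\log(a_iu_i)}$, with the value $a_iu_i$ when $a_iu_i=a_ju_j$. *)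

(* Defs.v *)
From HB Require Import structures.
From mathcomp Require Import all_boot all_order all_algebra.
From mathcomp Require Import all_classical all_reals all_analysis.
Set Implicit Arguments. Unset Strict Implicit. Unset Printing Implicit Defensive.
Import Order.TTheory GRing.Theory Num.Theory.
Import numFieldNormedType.Exports.
Local Open Scope ring_scope.

Section Defs.
Variables (R : realType) (N : nat).

Definition Hmx (h : 'rV[R]_N) : 'M[R]_N := diag_mx h.
Definition Dmx (h : 'rV[R]_N) (Q : 'M[R]_N) : 'M[R]_N := invmx (Hmx h) *m Q.

Definition Fgeom (a : 'I_N -> R) (i j : 'I_N) (x y : R) : R :=
  Num.sqrt (a i * x * (a j * y)).

Definition Flog (a : 'I_N -> R) (i j : 'I_N) (x y : R) : R :=
  if a i * x == a j * y then a i * x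
  else (a j * y - a i * x) / (ln (a j * y) - ln (a i * x)).

Definition solves (h : 'rV[R]_N) (Q : 'M[R]_N)
    (F : 'I_N -> 'I_N -> R -> R -> R) (u : R -> 'I_N -> R) : Prop :=
  (forall t : R, 0 <= t -> forall i, 0 < u t i) /\
  (forall i, ({within `[0, +oo[, continuous (fun s : R => u s i)})%classic) /\
  (forall t : R, 0 < t -> forall i : 'I_N,
     is_derive t (1 : R) (fun s : R => u s i)
       (-2 * \sum_(j < N) Dmx h Q i j * F i j (u t i) (u t j))).

Definition S_geom (h : 'rV[R]_N) (a : 'I_N -> R) (v : 'I_N -> R) : R :=
  -2 * \sum_(i < N) h 0 i * Num.sqrt (v i / a i).

Definition S_log (h : 'rV[R]_N) (a : 'I_N -> R) (v : 'I_N -> R) : R :=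
  \sum_(i < N) h 0 i * (v i * ln (a i * v i) - v i).

End Defs.

(* Main.v *)
Require Import Defs.
From HB Require Import structures.
From mathcomp Require Import all_boot all_order all_algebra.
From mathcomp Require Import all_classical all_reals all_analysis.
Import Order.TTheory GRing.Theory Num.Theory.
Import numFieldNormedType.Exports.
Local Open Scope ring_scope.
From mathcomp Require Import ring lra.
Section H.
Variable R : realType.

Lemma is_derive_scal (c y : R) : is_derive y 1 (fun z : R => c * z) c.
Proof.
have := @is_deriveZ R R R id c y 1 1 (is_derive_id _ _).
by rewrite /GRing.scale /= mulr1.
Qed.

Lemma deriv_cont (f : R -> R) (y d : R) : is_derive y 1 f d -> {for y, continuous f}.
Proof. by move=> [df _]; apply/differentiable_continuous/derivable1_diffP. Qed.

Lemma const_deriv0 (g : R -> R) (t : R) : 0 <= t -> {within `[0,t], continuous g}%classic ->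
  (forall x : R, 0 < x -> is_derive x 1 g 0) -> g t = g 0.
Proof.
rewrite le0r => /orP[/eqP->//|t0] gc gd.
have [c _ /eqP] := MVT t0 (fun x xi => gd x (andP (xi : x \in `]0, t[) : _).1) gc.
by rewrite mul0r subr_eq0 => /eqP.
Qed.

Lemma cont_sum N (u : R -> 'I_N -> R) (phi : 'I_N -> R -> R) t :
  (forall s, 0 <= s -> forall i, 0 < u s i) ->
  (forall i, {within `[0, +oo[, continuous (fun s => u s i)}%classic) ->
  (forall i y, 0 < y -> {for y, continuous (phi i)}) ->
  {within `[0, t], continuous (fun s => \sum_(i<N) phi i (u s i))}%classic.
Proof.
move=> upos ucont phic.
apply/subspace_continuousP => x xA.
apply: cvg_big; first exact: add_continuous.
move=> i _.
have uc : {within `[0, t], continuous (fun s => u s i)}%classic.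
  apply: continuous_subspaceW (ucont i) => y /=; rewrite !in_itv /= => /andP[-> _].
  done.
move/subspace_continuousP: uc => /(_ x xA) uc.
apply: (cvg_comp _ _ uc); apply: phic; apply: upos.
by move: xA; rewrite /= in_itv /= => /andP[].
Qed.

Lemma key N (u du : R -> 'I_N -> R) (phi dphi : 'I_N -> R -> R) :
  (forall s, 0 <= s -> forall i, 0 < u s i) ->
  (forall i, {within `[0, +oo[, continuous (fun s => u s i)}%classic) ->
  (forall t : R, 0 < t -> forall i, is_derive t 1 (fun s => u s i) (du t i)) ->
  (forall i (y : R), 0 < y -> is_derive y 1 (phi i) (dphi i y)) ->
  (forall t : R, 0 < t -> \sum_(i < N) dphi i (u t i) * du t i = 0) ->
  forall t : R, 0 <= t -> \sum_(i < N) phi i (u t i) = \sum_(i < N) phi i (u 0 i).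
Proof.
move=> upos ucont ud phid sum0 t t0.
apply: (@const_deriv0 (fun s => \sum_(i < N) phi i (u s i))) => //.
  apply: cont_sum => // i y y0; exact: deriv_cont (phid i y y0).
move=> x x0.
have D : is_derive x 1 (\sum_(i < N) (phi i \o (fun s => u s i)))
   (\sum_(i < N) dphi i (u x i) * du x i).
  apply: is_derive_sum => i.
  apply: is_derive1_comp; last exact: ud.
  apply: phid; apply: upos; exact: ltW.
rewrite fct_sumE in D; exact: (is_derive_eq D (sum0 x x0)).
Qed.

Lemma dM (f g : R -> R) (x df dg : R) : is_derive x 1 f df -> is_derive x 1 g dg ->
  is_derive x 1 (fun z => f z * g z) (f x * dg + g x * df).
Proof. move=> F G; exact: (is_deriveM F G). Qed.

Lemma dB (f g : R -> R) (x df dg : R) : is_derive x 1 f df -> is_derive x 1 g dg ->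
  is_derive x 1 (fun z => f z - g z) (df - dg).
Proof. move=> F G; exact: (is_deriveB F G). Qed.

Lemma dcomp (f g : R -> R) (x df dg : R) : is_derive (g x) 1 f df -> is_derive x 1 g dg ->
  is_derive x 1 (fun z => f (g z)) (df * dg).
Proof. move=> F G; exact: (is_derive1_comp F G). Qed.

Lemma did (x : R) : is_derive x 1 (fun z : R => z) 1.
Proof. exact: is_derive_id. Qed.
End H.
Arguments dM {R f g x df dg}. Arguments dB {R f g x df dg}. Arguments dcomp {R}. Arguments did {R}. Arguments is_derive_scal {R}.
Section M.
Variables (R : realType) (N : nat) (h : 'rV[R]_N) (Q : 'M[R]_N).
Hypothesis hpos : forall i, 0 < h 0 i.
Hypothesis Qskew : Q + Q^T = 0.
Hypothesis Q1 : Q *m const_mx 1 = 0 :> 'cV[R]_N.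

Lemma QhD i j : Q i j = h 0 i * Dmx h Q i j.
Proof.
have U : Hmx h \in unitmx.
  rewrite unitmxE /Hmx det_diag unitfE; apply/lt0r_neq0/prodr_gt0 => k _.
  exact: hpos.
have : Hmx h *m Dmx h Q = Q by rewrite /Dmx mulmxA mulmxV // mul1mx.
by move=> {1}<-; rewrite /Hmx mul_diag_mx mxE.
Qed.

Lemma rowsum i : \sum_j Q i j = 0.
Proof.
have := congr1 (fun M : 'cV[R]_N => M i 0) Q1; rewrite !mxE /= => E; rewrite -[RHS]E.
by apply: eq_bigr => j _; rewrite ?mxE mulr1.
Qed.

Lemma skew i j : Q j i = - Q i j.
Proof.
have := congr1 (fun M : 'M[R]_N => M i j) Qskew; rewrite !mxE => /eqP.
by rewrite addrC addr_eq0 => /eqP.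
Qed.

Lemma colsum j : \sum_i Q i j = 0.
Proof.
by rewrite (eq_bigr (fun i => - Q j i)) ?sumrN ?rowsum ?oppr0 // => i _; rewrite (skew j i).
Qed.
End M.

Section G.
Variables (R : realType) (N : nat) (h : 'rV[R]_N) (Q : 'M[R]_N) (a : 'I_N -> R).
Hypothesis hpos : forall i, 0 < h 0 i.
Hypothesis Qskew : Q + Q^T = 0.
Hypothesis Q1 : Q *m const_mx 1 = 0 :> 'cV[R]_N.
Hypothesis apos : forall i, 0 < a i.

Lemma geom_part (u : R -> 'I_N -> R) : solves h Q (Fgeom a) u ->
  forall t, 0 <= t -> S_geom h a (u t) = S_geom h a (u 0).
Proof.
move=> [upos [ucont ud]] t t0.
rewrite /S_geom !mulr_sumr.
apply: (@key R N u (fun t i => -2 * \sum_(j < N) Dmx h Q i j * Fgeom a i j (u t i) (u t j))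
  (fun i y => -2 * (h 0 i * Num.sqrt (y / a i)))
  (fun i y => -2 * (h 0 i / a i) * ((2 * Num.sqrt (a i * y))^-1 * a i))) => //.
- move=> i y y0.
  have -> : (fun y => -2 * (h 0 i * Num.sqrt (y / a i))) =
            (fun y => (-2 * (h 0 i / a i)) * Num.sqrt (a i * y)).
    apply/funext => z.
    have -> : z / a i = (a i)^-1 ^+ 2 * (a i * z).
      by field; apply/lt0r_neq0.
    rewrite sqrtrM ?sqr_ge0 // sqrtr_sqr ger0_norm ?invr_ge0 ?ltW //.
    by rewrite !mulrA.
  apply: (@dcomp R (fun z => (-2 * (h 0 i / a i)) * z)); first exact: is_derive_scal.
  apply: (@dcomp R Num.sqrt); last exact: is_derive_scal.
  apply: is_derive1_sqrt; exact: mulr_gt0.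
- move=> s s0.
  have up k : 0 < u s k by apply: upos; exact: ltW.
  set w := fun k => Num.sqrt (a k * u s k).
  have wp k : 0 < w k by rewrite /w sqrtr_gt0 mulr_gt0.
  have -> : \sum_(i < N) -2 * (h 0 i / a i) * ((2 * Num.sqrt (a i * u s i))^-1 * a i) *
       (-2 * \sum_(j < N) Dmx h Q i j * Fgeom a i j (u s i) (u s j)) =
       \sum_(i < N) \sum_(j < N) (2 * w j) * Q i j.
    apply: eq_bigr => i _.
    rewrite mulrA mulr_sumr; apply: eq_bigr => j _.
    rewrite /Fgeom (@sqrtrM _ (a i * u s i) (a j * u s j)) ?mulr_ge0 ?ltW // (@QhD R N h Q hpos i j) -/(w i) -/(w j).
    field; apply/andP; split; apply/lt0r_neq0 => //.
  rewrite exchange_big /= big1 // => j _.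
  by rewrite -mulr_sumr (@colsum R N Q Qskew Q1) mulr0.
Qed.

Lemma Flog_sym i j (x y : R) : Flog a i j x y = Flog a j i y x.
Proof.
rewrite /Flog; case: (eqVneq (a i * x) (a j * y)) => [->|ne]; first by rewrite ?eqxx.
by rewrite -[a i * x - a j * y]opprB -[ln (a i * x) - ln (a j * y)]opprB invrN mulrNN.
Qed.

Lemma Flog_key i j (x y : R) : 0 < a i * x -> 0 < a j * y ->
  Flog a i j x y * (ln (a i * x) - ln (a j * y)) = a i * x - a j * y.
Proof.
move=> px py; rewrite /Flog; case: eqP => [->|ne]; first by rewrite !subrr mulr0.
have nz : ln (a j * y) - ln (a i * x) != 0.
  rewrite subr_eq0; apply/eqP => E; apply: ne; symmetry.
  by apply: ln_inj => //; rewrite posrE.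
by field.
Qed.

Lemma log_part (u : R -> 'I_N -> R) : solves h Q (Flog a) u ->
  forall t, 0 <= t -> S_log h a (u t) = S_log h a (u 0).
Proof.
move=> [upos [ucont ud]] t t0.
rewrite /S_log.
apply: (@key R N u (fun t i => -2 * \sum_(j < N) Dmx h Q i j * Flog a i j (u t i) (u t j))
  (fun i y => h 0 i * (y * ln (a i * y) - y))
  (fun i y => h 0 i * ln (a i * y))) => //.
- move=> i y y0.
  have ay : 0 < a i * y by rewrite mulr_gt0.
  have D1 : is_derive y 1 (fun z : R => ln (a i * z)) ((a i * y)^-1 * a i).
    have := @dcomp R (@ln R) (fun z => a i * z) y _ _ (is_derive1_ln ay) (@is_derive_scal R (a i) y).
    exact.
  have D2 := dM (@did R y) D1.
  have D3 := dB D2 (@did R y).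
  have D4 := dM (is_derive_cst (h 0 i) y 1) D3.
  apply: (is_derive_eq D4).
  rewrite /= mulr0 addr0; congr (_ * _).
  by field; apply/andP; split; apply/lt0r_neq0.
- move=> s s0.
  have up k : 0 < u s k by apply: upos; exact: ltW.
  set x := fun k => a k * u s k.
  have xp k : 0 < x k by rewrite /x mulr_gt0.
  set L := fun k => ln (x k).
  set F := fun i j => Flog a i j (u s i) (u s j).
  set T := \sum_(i < N) \sum_(j < N) Q i j * F i j * L i.
  have -> : \sum_(i < N) h 0 i * ln (a i * u s i) *
      (-2 * \sum_(j < N) Dmx h Q i j * Flog a i j (u s i) (u s j)) = -2 * T.
    rewrite /T mulr_sumr; apply: eq_bigr => i _.
    rewrite mulrCA; congr (_ * _); rewrite mulr_sumr; apply: eq_bigr => j _.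
    rewrite (@QhD R N h Q hpos i j) /F /L /x; ring.
  suff : T + T = 0 by move=> E; rewrite (_ : T = 0) ?mulr0 //; lra.
  have T1 : T = - \sum_(i < N) \sum_(j < N) Q i j * F i j * L j.
    rewrite /T exchange_big /= -sumrN; apply: eq_bigr => i _.
    rewrite -sumrN; apply: eq_bigr => j _.
    by rewrite (@skew R N Q Qskew j i) /F Flog_sym; ring.
  rewrite {2}T1 /T -sumrB.
  have -> : \sum_(i < N) (\sum_(j < N) Q i j * F i j * L i - \sum_(j < N) Q i j * F i j * L j)
      = \sum_(i < N) \sum_(j < N) (Q i j * x i - Q i j * x j).
    apply: eq_bigr => i _; rewrite -sumrB; apply: eq_bigr => j _.
    have K : F i j * (L i - L j) = x i - x j := Flog_key i j (u s i) (u s j) (xp i) (xp j).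
    transitivity (Q i j * (F i j * (L i - L j))); first ring.
    by rewrite K; ring.
  rewrite (eq_bigr (fun i => \sum_(j < N) Q i j * x i - \sum_(j < N) Q i j * x j));
    last by move=> i _; rewrite sumrB.
  rewrite sumrB big1 ?sub0r; last first.
    by move=> i _; rewrite -mulr_suml (@rowsum R N Q Q1) mul0r.
  rewrite exchange_big /= big1 ?oppr0 // => j _.
  by rewrite -mulr_suml (@colsum R N Q Qskew Q1) mul0r.
Qed.
End G.

Theorem mainTheorem2 (R : realType) (N : nat) (h : 'rV[R]_N) (Q : 'M[R]_N)
    (a : 'I_N -> R) :
  (2 <= N)%N ->
  (forall i, 0 < h 0 i) ->
  Q + Q^T = 0 ->
  Q *m const_mx 1 = 0 :> 'cV[R]_N ->
  (forall i, 0 < a i) ->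
  (forall u : R -> 'I_N -> R, solves h Q (Fgeom a) u ->
     forall t, 0 <= t -> S_geom h a (u t) = S_geom h a (u 0)) /\
  (forall u : R -> 'I_N -> R, solves h Q (Flog a) u ->
     forall t, 0 <= t -> S_log h a (u t) = S_log h a (u 0)).
Proof.
move=> _ hp Qs Q1 ap; split.
- exact: geom_part.
- exact: log_part.
Qed.
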